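(* (Soundness) Let $\mathfrak M=(\mathfrak T,\mathcal V)$ be a TFL model and $\phi$ a TFL formula in positive normal form, and let $H_0=(\mathfrak X(s_0),t_\epsilon)$ be the initial process. If $H_0\notin[\![\phi]\!]^{\mathfrak T}_{\mathcal V}$, then Adam has a winning strategy in the model-checking game $\mathcal G(H_0,\phi)$.
   Context: Systems: $\mathfrak T=(S,s_0,T,I,\Sigma)$, a transition system with independence (states $S$, initial $s_0$, labels $\Sigma$, transitions $T\subseteq S\times\Sigma\times S$, irreflexive symmetric independence $I\subseteq T\times T$ satisfying the standard TSI axioms), image-finite. For $t=(s,a,s')$: $\sigma(t)=s,\tau(t)=s',\delta(t)=a$. $t\otimes t'$ iff $\sigma(t)=\sigma(t')\wedge tIt'$; $t\ominus t'$ iff $\tau(t)=\sigma(t')\wedge tIt'$; $t\le t'$ iff $\tau(t)=\sigma(t')\wedge\neg tIt'$. $\mathfrak X(s)$ = transitions with source $s$; conflict-free set = set with common source, pairwise $\otimes$; support sets = the $\mathfrak X(s)$ and non-empty conflict-free sets; $M\sqsubseteq R$ iff $M\subseteq R$ and no $t\in R\setminus M$ has $t\otimes t'$ for all $t'\in M$; $\mathcal X$ = all $\mathfrak X(s)$ and all support sets $M\sqsubseteq\mathfrak X(s)$; $\mathfrak A=T\cup\{t_\epsilon\}$ with fresh $t_\epsilon$, $\tau(t_\epsilon)=s_0$, $t_\epsilon\le t$ whenever $\sigma(t)=s_0$, never $t_\epsilon\ominus t$; processes $\mathfrak S=\mathcal X\times\mathfrak A$. TFL: formulas $\phi::=Z\mid\neg\phi\mid\phi\wedge\phi\mid\langle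 a\rangle_c\phi\mid\langle a\rangle_{nc}\phi\mid\langle\otimes\rangle\phi\mid\mu Z.\phi$ (free occurrences of $Z$ in $\mu Z.\phi$ under an even number of negations), with duals $\vee$, $[a]_c=\neg\langle a\rangle_c\neg$, $[a]_{nc}$, $[\otimes]=\neg\langle\otimes\rangle\neg$, $\nu Z.\phi=\neg\mu Z.\neg\phi[\neg Z/Z]$. A model is $(\mathfrak T,\mathcal V)$ with $\mathcal V:\mathrm{Var}\to2^{\mathfrak S}$. Semantics in $2^{\mathfrak S}$: $[\![Z]\!]=\mathcal V(Z)$, $\neg$ complement, $\wedge$ intersection, $[\![\langle a\rangle_c\phi]\!]=\{(R,t):\exists r\in R.\ \delta(r)=a,\ t\le r,\ (\mathfrak X(\tau(r)),r)\in[\![\phi]\!]\}$, $\langle a\rangle_{nc}$ likewise with $t\ominus r$, $[\![\langle\otimes\rangle\phi]\!]=\{(R,t):\exists M\in\mathcal X.\ M\sqsubseteq R,\ (M,t)\in[\![\phi]\!]\}$, $[\![\mu Z.\phi]\!]_{\mathcal V}=\bigcap\{Q\subseteq\mathfrak S:[\![\phi]\!]_{\mathcal V[Z:=Q]}\subseteq Q\}$. Positive normal form: negation only on variables, no two binders bind the same variable. $Sub(\phi)$ is the set of subformulas. Model-checking game $\mathcal G(H_0,\phi)$ between Eve and Adam: configurations $H\vdash\psi$ with $H\in\mathfrak S$, $\psi\in Sub(\phi)$; start $H_0\vdash\phi$. Rules: $H\vdash\mu Z.\psi$ or $H\vdash\nu Z.\psi$ moves to $H\vdash Z$; $H\vdash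 Z$ with $Z$ bound by $\mu Z.\psi$ or $\nu Z.\psi$ moves to $H\vdash\psi$; at $H\vdash\psi_0\vee\psi_1$ Eve (at $\wedge$, Adam) chooses $H\vdash\psi_i$; at $(R,t)\vdash\langle a\rangle_c\psi$ Eve (at $[a]_c\psi$, Adam) chooses $r\in R$ with $\delta(r)=a$, $t\le r$, moving to $(\mathfrak X(\tau(r)),r)\vdash\psi$; same for $\langle a\rangle_{nc}$/$[a]_{nc}$ with $t\ominus r$; at $(R,t)\vdash\langle\otimes\rangle\psi$ Eve (at $[\otimes]\psi$, Adam) chooses $M\in\mathcal X$ with $M\sqsubseteq R$, moving to $(M,t)\vdash\psi$. Adam wins a play iff it ends at $H\vdash Z$ ($Z$ free) with $H\notin\mathcal V(Z)$, or at a diamond configuration ($\langle a\rangle_c$, $\langle a\rangle_{nc}$, $\langle\otimes\rangle$) with no available choice, or is infinite and the syntactically outermost variable occurring infinitely often is bound by a $\mu$; Eve wins dually (ends at $H\vdash Z$ with $H\in\mathcal V(Z)$, at a box configuration with no available choice, or infinite with the outermost infinitely-often variable bound by a $\nu$). A player has a winning strategy if she/he can guarantee winning every play. *)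

(* Defs.v *)
From Stdlib Require Import List Arith Relations.
Import ListNotations.
Set Implicit Arguments.

Section TSI.
Context {S L : Type}.
Definition trans := (S * L * S)%type.
Definition src (t : trans) : S := fst (fst t).
Definition lbl (t : trans) : L := snd (fst t).
Definition tgt (t : trans) : S := snd t.

Variables (s0 : S) (T : trans -> Prop) (I : trans -> trans -> Prop).

Definition tsi_prec (t t' : trans) : Prop :=
  lbl t = lbl t' /\
  exists b : L, I t (src t, b, src t') /\ I t (tgt t, b, tgt t') /\ I (src t, b, src t') t'.

Definition tsi_sim : trans -> trans -> Prop := clos_refl_sym_trans trans tsi_prec.

(* The standard TSI axioms (Winskel--Nielsen), plus I irreflexive, symmetric, I ⊆ T×T *)
Definition is_TSI : Prop :=
  (forall t t', I t t' -> T t /\ T t') /\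
  (forall t, ~ I t t) /\
  (forall t t', I t t' -> I t' t) /\
  (forall s a s1 s2, tsi_sim (s, a, s1) (s, a, s2) -> s1 = s2) /\
  (forall s a s1 b s2, I (s, a, s1) (s, b, s2) ->
     exists u, I (s, a, s1) (s1, b, u) /\ I (s, b, s2) (s2, a, u)) /\
  (forall s a s1 b u, I (s, a, s1) (s1, b, u) ->
     exists s2, I (s, a, s1) (s, b, s2) /\ I (s, b, s2) (s2, a, u)) /\
  (forall t t' w, (tsi_prec t t' \/ tsi_prec t' t) -> I t' w -> I t w).

Definition image_finite : Prop :=
  forall (s : S) (a : L), exists l : list S, forall s', T (s, a, s') -> In s' l.

Definition otimes (t t' : trans) : Prop := src t = src t' /\ I t t'.

(* Elements of A = T ∪ {t_eps}: [None] is t_eps, [Some t] is t ∈ T *)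
Definition atrans := option trans.
Definition in_A (t : atrans) : Prop :=
  match t with None => True | Some t => T t end.

(* t <= r  (tau(t_eps) = s0, t_eps never independent) *)
Definition causal (t : atrans) (r : trans) : Prop :=
  match t with
  | None => src r = s0
  | Some t => tgt t = src r /\ ~ I t r
  end.

Definition concur (t : atrans) (r : trans) : Prop :=
  match t with
  | None => False
  | Some t => tgt t = src r /\ I t r
  end.

Definition tset := trans -> Prop.

Definition Xs (s : S) : tset := fun t => T t /\ src t = s.

Definition set_eq (M R : tset) : Prop := forall t, M t <-> R t.

Definition conflict_free (M : tset) : Prop :=
  (exists s, forall t, M t -> T t /\ src t = s) /\
  (forall t t', M t -> M t' -> t <> t' -> otimes t t').

Definition support_set (M : tset) : Prop :=
  (exists s, set_eq M (Xs s)) \/ (conflict_free M /\ exists t, M t).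

Definition sqsub (M R : tset) : Prop :=
  (forall t, M t -> R t) /\
  ~ (exists t, R t /\ ~ M t /\ forall t', M t' -> otimes t t').

Definition in_calX (M : tset) : Prop :=
  (exists s, set_eq M (Xs s)) \/ (support_set M /\ exists s, sqsub M (Xs s)).

Definition process := (tset * atrans)%type.
Definition is_proc (H : process) : Prop := in_calX (fst H) /\ in_A (snd H).

Definition H0 : process := (Xs s0, None).

End TSI.

Definition var := nat.

Inductive form (L : Type) : Type :=
| FVar  : var -> form L
| FNeg  : form L -> form L
| FAnd  : form L -> form L -> form L
| FOr   : form L -> form L -> form L
| FDiaC : L -> form L -> form L
| FBoxC : L -> form L -> form L
| FDiaNC : L -> form L -> form L
| FBoxNC : L -> form L -> form L
| FDiaO : form L -> form L
| FBoxO : form L -> form L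
| FMu   : var -> form L -> form L
| FNu   : var -> form L -> form L.
Arguments FVar {L}.

(* Sub phi psi : psi is a subformula of phi *)
Inductive Sub {L : Type} : form L -> form L -> Prop :=
| Sub_refl : forall f, Sub f f
| Sub_Neg : forall f g, Sub f g -> Sub (FNeg f) g
| Sub_AndL : forall f1 f2 g, Sub f1 g -> Sub (FAnd f1 f2) g
| Sub_AndR : forall f1 f2 g, Sub f2 g -> Sub (FAnd f1 f2) g
| Sub_OrL : forall f1 f2 g, Sub f1 g -> Sub (FOr f1 f2) g
| Sub_OrR : forall f1 f2 g, Sub f2 g -> Sub (FOr f1 f2) g
| Sub_DiaC : forall a f g, Sub f g -> Sub (FDiaC a f) g
| Sub_BoxC : forall a f g, Sub f g -> Sub (FBoxC a f) g
| Sub_DiaNC : forall a f g, Sub f g -> Sub (FDiaNC a f) g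
| Sub_BoxNC : forall a f g, Sub f g -> Sub (FBoxNC a f) g
| Sub_DiaO : forall f g, Sub f g -> Sub (FDiaO f) g
| Sub_BoxO : forall f g, Sub f g -> Sub (FBoxO f) g
| Sub_Mu : forall z f g, Sub f g -> Sub (FMu z f) g
| Sub_Nu : forall z f g, Sub f g -> Sub (FNu z f) g.

(* occ z p f : z occurs free in f under a number of negations of parity p
   (p = true : odd).  The derived connectives (\/, boxes, nu) contribute an
   even number of negations, as in their definitions. *)
Inductive occ {L : Type} (z : var) : bool -> form L -> Prop :=
| occ_Var : occ z false (FVar z)
| occ_Neg : forall p f, occ z p f -> occ z (negb p) (FNeg f)
| occ_AndL : forall p f1 f2, occ z p f1 -> occ z p (FAnd f1 f2)
| occ_AndR : forall p f1 f2, occ z p f2 -> occ z p (FAnd f1 f2)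
| occ_OrL : forall p f1 f2, occ z p f1 -> occ z p (FOr f1 f2)
| occ_OrR : forall p f1 f2, occ z p f2 -> occ z p (FOr f1 f2)
| occ_DiaC : forall p a f, occ z p f -> occ z p (FDiaC a f)
| occ_BoxC : forall p a f, occ z p f -> occ z p (FBoxC a f)
| occ_DiaNC : forall p a f, occ z p f -> occ z p (FDiaNC a f)
| occ_BoxNC : forall p a f, occ z p f -> occ z p (FBoxNC a f)
| occ_DiaO : forall p f, occ z p f -> occ z p (FDiaO f)
| occ_BoxO : forall p f, occ z p f -> occ z p (FBoxO f)
| occ_Mu : forall p y f, y <> z -> occ z p f -> occ z p (FMu y f)
| occ_Nu : forall p y f, y <> z -> occ z p f -> occ z p (FNu y f).

Definition TFL_formula {L : Type} (phi : form L) : Prop :=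
  forall z psi, (Sub phi (FMu z psi) \/ Sub phi (FNu z psi)) -> ~ occ z true psi.

Fixpoint binders {L : Type} (f : form L) : list var :=
  match f with
  | FVar _ => []
  | FNeg g | FDiaC _ g | FBoxC _ g | FDiaNC _ g | FBoxNC _ g
  | FDiaO g | FBoxO g => binders g
  | FAnd g h | FOr g h => binders g ++ binders h
  | FMu z g | FNu z g => z :: binders g
  end.

Definition PNF {L : Type} (phi : form L) : Prop :=
  (forall g, Sub phi (FNeg g) -> exists z, g = FVar z) /\
  NoDup (binders phi) /\
  (forall z p, occ z p phi -> ~ In z (binders phi)).

Section Semantics.
Context {S L : Type} (s0 : S) (T : @trans S L -> Prop) (I : @trans S L -> @trans S L -> Prop).

Definition pset := @process S L -> Prop.
Definition valuation := var -> pset.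

Definition upd (V : valuation) (z : var) (Q : pset) : valuation :=
  fun y => if Nat.eqb y z then Q else V y.

Definition pcompl (X : pset) : pset := fun H => is_proc T I H /\ ~ X H.

Definition dia_c (a : L) (X : pset) : pset := fun H =>
  is_proc T I H /\
  exists r, fst H r /\ lbl r = a /\ causal s0 I (snd H) r /\ X (Xs T (tgt r), Some r).

Definition dia_nc (a : L) (X : pset) : pset := fun H =>
  is_proc T I H /\
  exists r, fst H r /\ lbl r = a /\ concur I (snd H) r /\ X (Xs T (tgt r), Some r).

Definition dia_o (X : pset) : pset := fun H =>
  is_proc T I H /\
  exists M, in_calX T I M /\ sqsub I M (fst H) /\ X (M, snd H).

Definition lfp (F : pset -> pset) : pset := fun H =>
  is_proc T I H /\
  forall Q : pset, (forall H', Q H' -> is_proc T I H') ->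
                   (forall H', F Q H' -> Q H') -> Q H.

Fixpoint sem (f : form L) (V : valuation) : pset :=
  match f with
  | FVar z => V z
  | FNeg g => pcompl (sem g V)
  | FAnd g h => fun H => sem g V H /\ sem h V H
  | FOr g h => pcompl (fun H => pcompl (sem g V) H /\ pcompl (sem h V) H)
  | FDiaC a g => dia_c a (sem g V)
  | FBoxC a g => pcompl (dia_c a (pcompl (sem g V)))
  | FDiaNC a g => dia_nc a (sem g V)
  | FBoxNC a g => pcompl (dia_nc a (pcompl (sem g V)))
  | FDiaO g => dia_o (sem g V)
  | FBoxO g => pcompl (dia_o (pcompl (sem g V)))
  | FMu z g => lfp (fun Q => sem g (upd V z Q))
  | FNu z g => (* nu Z.phi = ~ mu Z. ~ phi[~Z/Z] *)
      pcompl (lfp (fun Q => pcompl (sem g (upd V z (pcompl Q)))))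
  end.

Definition valuation_ok (V : valuation) : Prop :=
  forall z H, V z H -> is_proc T I H.

End Semantics.

Section Game.
Context {C : Type}
  (mv : C -> C -> Prop)
  (adam : C -> Prop)                 (* positions where Adam chooses *)
  (adam_end : C -> Prop)             (* Adam wins a finite play ending here *)
  (adam_inf : (nat -> C) -> Prop).   (* Adam wins this infinite play *)

(* a strategy for Adam maps a (non-empty) history, in forward order, to a choice *)
Definition strategy := list C -> C.

Definition stuck (c : C) : Prop := ~ exists c', mv c c'.

Definition legal (sg : strategy) : Prop :=
  forall h c, adam c -> (exists c', mv c c') -> mv c (sg (h ++ [c])).

Definition consistent (sg : strategy) (c0 : C) (h : list C) : Prop :=
  nth_error h 0 = Some c0 /\
  forall i c c', nth_error h i = Some c -> nth_error h (S i) = Some c' ->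
    mv c c' /\ (adam c -> c' = sg (firstn (S i) h)).

Definition adam_wins_with (sg : strategy) (c0 : C) : Prop :=
  (forall h c, consistent sg c0 (h ++ [c]) -> stuck c -> adam_end c) /\
  (forall pi : nat -> C,
     pi 0 = c0 ->
     (forall i, mv (pi i) (pi (S i)) /\
                (adam (pi i) -> pi (S i) = sg (map pi (seq 0 (S i))))) ->
     adam_inf pi).

Definition adam_has_winning_strategy (c0 : C) : Prop :=
  exists sg, legal sg /\ adam_wins_with sg c0.

End Game.

Section MCGame.
Context {S L : Type} (s0 : S) (T : @trans S L -> Prop) (I : @trans S L -> @trans S L -> Prop)
        (V : @valuation S L) (phi : form L).

Definition config := (@process S L * form L)%type.

Inductive mc_move : config -> config -> Prop :=
| mv_mu : forall H z g, mc_move (H, FMu z g) (H, FVar z)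
| mv_nu : forall H z g, mc_move (H, FNu z g) (H, FVar z)
| mv_var : forall H z g, (Sub phi (FMu z g) \/ Sub phi (FNu z g)) ->
    mc_move (H, FVar z) (H, g)
| mv_andL : forall H g h, mc_move (H, FAnd g h) (H, g)
| mv_andR : forall H g h, mc_move (H, FAnd g h) (H, h)
| mv_orL : forall H g h, mc_move (H, FOr g h) (H, g)
| mv_orR : forall H g h, mc_move (H, FOr g h) (H, h)
| mv_diac : forall R t a g r, R r -> lbl r = a -> causal s0 I t r ->
    mc_move ((R, t), FDiaC a g) ((Xs T (tgt r), Some r), g)
| mv_boxc : forall R t a g r, R r -> lbl r = a -> causal s0 I t r ->
    mc_move ((R, t), FBoxC a g) ((Xs T (tgt r), Some r), g)
| mv_dianc : forall R t a g r, R r -> lbl r = a -> concur I t r ->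
    mc_move ((R, t), FDiaNC a g) ((Xs T (tgt r), Some r), g)
| mv_boxnc : forall R t a g r, R r -> lbl r = a -> concur I t r ->
    mc_move ((R, t), FBoxNC a g) ((Xs T (tgt r), Some r), g)
| mv_diao : forall R t g M, in_calX T I M -> sqsub I M R ->
    mc_move ((R, t), FDiaO g) ((M, t), g)
| mv_boxo : forall R t g M, in_calX T I M -> sqsub I M R ->
    mc_move ((R, t), FBoxO g) ((M, t), g).

Definition mc_adam (c : config) : Prop :=
  match snd c with
  | FAnd _ _ | FBoxC _ _ | FBoxNC _ _ | FBoxO _ => True
  | _ => False
  end.

Definition mc_adam_end (c : config) : Prop :=
  match snd c with
  | FVar z => ~ V z (fst c)
  | FNeg (FVar z) => V z (fst c)
  | FDiaC _ _ | FDiaNC _ _ | FDiaO _ => True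
  | _ => False
  end.

Definition inf_often (z : var) (pi : nat -> config) : Prop :=
  forall n, exists m, n <= m /\ snd (pi m) = FVar z.

Definition binder_of (z : var) (chi : form L) : Prop :=
  Sub phi chi /\ exists g, chi = FMu z g \/ chi = FNu z g.

(* Adam wins an infinite play iff the syntactically outermost variable
   occurring infinitely often is bound by a mu *)
Definition mc_adam_inf (pi : nat -> config) : Prop :=
  exists z chi,
    inf_often z pi /\ binder_of z chi /\ (exists g, chi = FMu z g) /\
    (forall y chiy, inf_often y pi -> binder_of y chiy -> Sub chi chiy).

Definition adam_wins_game (Hinit : @process S L) : Prop :=
  adam_has_winning_strategy mc_move mc_adam mc_adam_end mc_adam_inf (Hinit, phi).

End MCGame.

(* Main.v *)
Require Import Defs.
From Stdlib Require Import List Arith Lia Classical ClassicalEpsilon.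
Import ListNotations.


Section Gen.
Variables (C : Type) (d : C) (mv : C -> C -> Prop) (adam adam_end : C -> Prop)
  (adam_inf : (nat -> C) -> Prop).
Hypothesis shift_inf : forall pi j, adam_inf (fun k => pi (j + k)) -> adam_inf pi.

Definition hist (pi : nat -> C) i := map pi (seq 0 (S i)).
Definition stp (sg : strategy) pi i :=
  mv (pi i) (pi (S i)) /\ (adam (pi i) -> pi (S i) = sg (hist pi i)).

Definition WinS sg c0 (X B : C -> Prop) :=
  legal mv adam sg /\
  (forall pi n, pi 0 = c0 -> (forall i, i < n -> stp sg pi i) ->
     (forall i, i < n -> ~ X (pi i)) ->
     (X (pi n) -> B (pi n)) /\ (~ X (pi n) -> stuck mv (pi n) -> adam_end (pi n))) /\
  (forall pi, pi 0 = c0 -> (forall i, stp sg pi i) -> (forall i, ~ X (pi i)) -> adam_inf pi).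

Definition Win c0 X B := exists sg, WinS sg c0 X B.

Lemma map_seq_shift (f : nat -> C) m : forall j s,
  map f (seq (j + s) m) = map (fun k => f (j + k)) (seq s m).
Proof.
  induction m; intros j s; simpl; auto.
  f_equal. rewrite <- IHm. f_equal. f_equal. lia.
Qed.

Lemma hist_shift pi j i : j <= i ->
  skipn j (hist pi i) = hist (fun k => pi (j + k)) (i - j).
Proof.
  intros Hji. unfold hist.
  replace (S i) with (j + S (i - j)) by lia.
  rewrite seq_app, map_app.
  rewrite skipn_app. rewrite length_map, length_seq.
  rewrite skipn_all2 by (rewrite length_map, length_seq; lia).
  replace (j - j) with 0 by lia. simpl.
  pose proof (map_seq_shift pi (S (i - j)) j 0) as E. rewrite Nat.add_0_r in E.
  exact E.
Qed.

Lemma length_hist pi i : length (hist pi i) = S i.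
Proof. unfold hist. rewrite length_map, length_seq. auto. Qed.

Lemma nth_hist pi i k : k <= i -> nth k (hist pi i) d = pi k.
Proof.
  intros Hk. unfold hist.
  rewrite nth_indep with (d' := pi 0) by (rewrite length_map, length_seq; lia).
  rewrite map_nth. rewrite seq_nth by lia. auto.
Qed.

Lemma skipn_snoc {A} (h : list A) (c : A) j : j <= length h ->
  skipn j (h ++ [c]) = skipn j h ++ [c].
Proof.
  intros Hj. rewrite skipn_app. replace (j - length h) with 0 by lia. auto.
Qed.

Lemma min_ex (P : nat -> Prop) : (exists n, P n) -> exists m, P m /\ forall k, k < m -> ~ P k.
Proof.
  intros [n Hn]. revert Hn. pattern n. apply (well_founded_ind lt_wf). clear n.
  intros n IH Hn.
  destruct (classic (exists k, k < n /\ P k)) as [[k [Hk HPk]]|Hno].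
  - apply (IH k Hk HPk).
  - exists n. split; auto. intros k Hk HP. apply Hno. eauto.
Qed.

Lemma max_ex (P : nat -> Prop) N : P 0 -> (forall k, P k -> k <= N) ->
  exists j, P j /\ forall k, P k -> k <= j.
Proof.
  intros H0' Hb.
  destruct (min_ex (fun m => exists j, P j /\ m = N - j)) as [m [[j [Pj Hm]] Hmin]].
  - exists (N - 0). exists 0. auto.
  - exists j. split; auto.
    intros k Pk. pose proof (Hb k Pk). pose proof (Hb j Pj).
    destruct (le_lt_dec k j); auto. exfalso.
    apply (Hmin (N - k)). lia. exists k. auto.
Qed.

Definition dflt : strategy := fun h => epsilon (inhabits d) (fun c' => mv (last h d) c').

Lemma dflt_legal : legal mv adam dflt.
Proof.
  intros h c _ Hex. unfold dflt. rewrite last_last.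
  apply (epsilon_spec (inhabits d) (fun c' => mv c c')). auto.
Qed.

Definition choose_win (c : C) X B : strategy :=
  epsilon (inhabits dflt) (fun sg => legal mv adam sg /\ (Win c X B -> WinS sg c X B)).

Lemma choose_win_spec c X B : legal mv adam (choose_win c X B) /\
   (Win c X B -> WinS (choose_win c X B) c X B).
Proof.
  unfold choose_win. apply epsilon_spec.
  destruct (classic (Win c X B)) as [[sg Hsg]|Hn].
  - exists sg. split; auto. apply Hsg.
  - exists dflt. split; [apply dflt_legal| tauto].
Qed.

Definition FirstSw (Sw : nat -> C -> Prop) (h : list C) j :=
  j < length h /\ Sw j (nth j h d) /\ forall k, k < j -> ~ Sw k (nth k h d).

Definition comp_first (sg1 : strategy) Sw X B : strategy := fun h =>
  match excluded_middle_informative (exists j, FirstSw Sw h j) with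
  | left p => let j := proj1_sig (constructive_indefinite_description _ p) in
              choose_win (nth j h d) X B (skipn j h)
  | right _ => sg1 h end.

Lemma firstsw_uniq Sw h j j' : FirstSw Sw h j -> FirstSw Sw h j' -> j = j'.
Proof.
  intros [_ [A1 B1]] [_ [A2 B2]].
  destruct (lt_eq_lt_dec j j') as [[Hl|He]|Hl]; auto.
  - exfalso. exact (B2 j Hl A1).
  - exfalso. exact (B1 j' Hl A2).
Qed.

Lemma comp_first_eq1 sg1 Sw X B h j : FirstSw Sw h j ->
  comp_first sg1 Sw X B h = choose_win (nth j h d) X B (skipn j h).
Proof.
  intros Hj. unfold comp_first.
  destruct (excluded_middle_informative _) as [p|n].
  - destruct (constructive_indefinite_description _ p) as [j' Hj']. simpl.
    rewrite (firstsw_uniq _ _ _ _ Hj' Hj). auto.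
  - exfalso. eauto.
Qed.

Lemma comp_first_eq2 sg1 Sw X B h : (forall j, ~ FirstSw Sw h j) ->
  comp_first sg1 Sw X B h = sg1 h.
Proof.
  intros Hn. unfold comp_first.
  destruct (excluded_middle_informative _) as [p|n].
  - exfalso. destruct p as [j Hj]. exact (Hn j Hj).
  - auto.
Qed.

Lemma comp_first_legal sg1 Sw X B : legal mv adam sg1 -> legal mv adam (comp_first sg1 Sw X B).
Proof.
  intros Hl h c Ha Hex.
  destruct (classic (exists j, FirstSw Sw (h ++ [c]) j)) as [[j Hj]|Hn].
  - rewrite (comp_first_eq1 _ _ _ _ _ _ Hj).
    destruct Hj as [Hlen _]. rewrite length_app in Hlen. simpl in Hlen.
    rewrite skipn_snoc by lia. apply (proj1 (choose_win_spec _ X B)); auto.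
  - rewrite comp_first_eq2 by (intros j Hj; eauto). auto.
Qed.

Lemma firstsw_hist Sw pi i j :
  FirstSw Sw (hist pi i) j <-> j <= i /\ Sw j (pi j) /\ forall k, k < j -> ~ Sw k (pi k).
Proof.
  unfold FirstSw. rewrite length_hist. split.
  - intros [H1 [H2 H3]]. rewrite nth_hist in H2 by lia. split; [lia|split; auto].
    intros k Hk. rewrite <- nth_hist with (i := i) by lia. auto.
  - intros [H1 [H2 H3]]. split; [lia|]. rewrite nth_hist by lia. split; auto.
    intros k Hk. rewrite nth_hist by lia. auto.
Qed.

Lemma stp_tail (sg sg' : strategy) pi m i :
  stp sg pi (m + i) -> sg (hist pi (m + i)) = sg' (hist (fun k => pi (m + k)) i) ->
  stp sg' (fun k => pi (m + k)) i.
Proof.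
  intros [Hm Ha] He. unfold stp. rewrite Nat.add_succ_r. split; auto.
  intros Had. rewrite Ha by auto. auto.
Qed.

Lemma win_first (c0 : C) (sg1 : strategy) (Sw : nat -> C -> Prop) X B :
  legal mv adam sg1 ->
  (forall pi n, pi 0 = c0 -> (forall i, i < n -> stp sg1 pi i) ->
     (forall i, i < n -> ~ X (pi i) /\ ~ Sw i (pi i)) -> Sw n (pi n) -> Win (pi n) X B) ->
  (forall pi n, pi 0 = c0 -> (forall i, i < n -> stp sg1 pi i) ->
     (forall i, i < n -> ~ X (pi i) /\ ~ Sw i (pi i)) -> ~ Sw n (pi n) ->
     (X (pi n) -> B (pi n)) /\ (~ X (pi n) -> stuck mv (pi n) -> adam_end (pi n))) ->
  (forall pi, pi 0 = c0 -> (forall i, stp sg1 pi i) ->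
     (forall i, ~ X (pi i) /\ ~ Sw i (pi i)) -> adam_inf pi) ->
  Win c0 X B.
Proof.
  intros Hl HA HB HC. set (sg := comp_first sg1 Sw X B).
  assert (F1 : forall pi i, (forall k, k <= i -> ~ Sw k (pi k)) -> sg (hist pi i) = sg1 (hist pi i)).
  { intros pi i Hk. apply comp_first_eq2. intros j Hj. apply firstsw_hist in Hj.
    destruct Hj as [Hji [Hs _]]. exact (Hk j Hji Hs). }
  assert (F2 : forall pi i m, Sw m (pi m) -> (forall k, k < m -> ~ Sw k (pi k)) ->
     sg (hist pi (m + i)) = choose_win (pi m) X B (hist (fun k => pi (m + k)) i)).
  { intros pi i m Hs Hk. unfold sg.
    rewrite (comp_first_eq1 sg1 Sw X B (hist pi (m + i)) m).
    - rewrite nth_hist by lia. rewrite hist_shift by lia.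
      replace (m + i - m) with i by lia. auto.
    - apply firstsw_hist. split; [lia|auto]. }
  exists sg. split; [apply comp_first_legal; auto|split].
  - intros pi n H0p Hst HX.
    destruct (classic (exists k, k <= n /\ Sw k (pi k))) as [Hex|Hno].
    + destruct (min_ex _ Hex) as [m [[Hmn Hsm] Hmin]].
      assert (Hmin' : forall k, k < m -> ~ Sw k (pi k)).
      { intros k Hk Hs. apply (Hmin k Hk). split; auto; lia. }
      assert (Hw : Win (pi m) X B).
      { apply HA; auto.
        - intros i Hi. unfold stp. destruct (Hst i ltac:(lia)) as [Hm Ha]. split; auto.
          intros Had. rewrite Ha by auto. apply F1. intros k Hk. apply Hmin'. lia.
        - intros i Hi. split; [apply HX; lia| apply Hmin'; auto]. }
      destruct (proj2 (choose_win_spec (pi m) X B) Hw) as [_ [Hfin _]].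
      specialize (Hfin (fun k => pi (m + k)) (n - m)). simpl in Hfin.
      rewrite Nat.add_0_r in Hfin. replace (m + (n - m)) with n in Hfin by lia.
      apply Hfin; auto.
      * intros i Hi. apply stp_tail with (sg := sg). apply Hst. lia.
        apply F2; auto.
      * intros i Hi. apply HX. lia.
    + apply HB; auto.
      * intros i Hi. unfold stp. destruct (Hst i Hi) as [Hm Ha]. split; auto.
        intros Had. rewrite Ha by auto. apply F1. intros k Hk Hs. apply Hno. exists k. split; auto; lia.
      * intros i Hi. split; auto. intros Hs. apply Hno. exists i. split; auto; lia.
      * intros Hs. apply Hno. eauto.
  - intros pi H0p Hst HX.
    destruct (classic (exists k, Sw k (pi k))) as [Hex|Hno].
    + destruct (min_ex _ Hex) as [m [Hsm Hmin]].
      assert (Hw : Win (pi m) X B).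
      { apply HA; auto.
        all: try (intros i Hi; split; [apply HX| apply Hmin; auto]).
        intros i Hi. unfold stp. destruct (Hst i) as [Hm Ha]. split; auto.
          intros Had. rewrite Ha by auto. apply F1. intros k Hk. apply Hmin. lia. }
      destruct (proj2 (choose_win_spec (pi m) X B) Hw) as [_ [_ Hinf]].
      apply (shift_inf pi m). apply Hinf.
      * simpl. rewrite Nat.add_0_r. auto.
      * intros i. apply stp_tail with (sg := sg). apply Hst.
        apply F2; auto.
      * intros i. apply HX.
    + apply HC; auto.
      * intros i. unfold stp. destruct (Hst i) as [Hm Ha]. split; auto.
        intros Had. rewrite Ha by auto. apply F1. intros k Hk Hs. apply Hno. eauto.
      * intros i. split; auto. intros Hs. apply Hno. eauto.
Qed.

Lemma win_exit c0 X B : X c0 -> B c0 -> Win c0 X B.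
Proof.
  intros HX HB. exists dflt. split; [apply dflt_legal|split].
  - intros pi n H0p _ HXn. destruct n as [|n].
    + rewrite H0p. tauto.
    + exfalso. apply (HXn 0). lia. rewrite H0p. auto.
  - intros pi H0p _ HXn. exfalso. apply (HXn 0). rewrite H0p. auto.
Qed.

Lemma win_one c0 sg1 X B : legal mv adam sg1 ->
  (forall pi, pi 0 = c0 -> stp sg1 pi 0 -> Win (pi 1) X B) ->
  ~ X c0 -> (stuck mv c0 -> adam_end c0) -> Win c0 X B.
Proof.
  intros Hl H1 HX Hst.
  apply (win_first c0 sg1 (fun i _ => i = 1)); auto.
  - intros pi n H0p Hs _ Hn. subst n. apply H1; auto.
  - intros pi n H0p _ Hav Hn. destruct n as [|[|n]].
    + rewrite H0p. tauto.
    + exfalso; auto.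
    + exfalso. apply (proj2 (Hav 1 ltac:(lia))). auto.
  - intros pi _ _ Hav. exfalso. apply (proj2 (Hav 1)). auto.
Qed.

Lemma win_eve c0 X B : ~ X c0 -> ~ adam c0 -> (stuck mv c0 -> adam_end c0) ->
  (forall c1, mv c0 c1 -> Win c1 X B) -> Win c0 X B.
Proof.
  intros HX Ha Hs Hw. apply (win_one c0 dflt); auto. apply dflt_legal.
  intros pi H0p [Hm _]. apply Hw. rewrite <- H0p. auto.
Qed.

Lemma win_adam c0 c1 X B : ~ X c0 -> adam c0 -> mv c0 c1 -> Win c1 X B -> Win c0 X B.
Proof.
  intros HX Ha Hm Hw.
  set (sg1 := fun h => if excluded_middle_informative (h = [c0]) then c1 else dflt h).
  apply (win_one c0 sg1); auto.
  - intros h c Hac Hex. unfold sg1.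
    destruct (excluded_middle_informative _) as [e|n].
    + apply app_eq_unit in e. destruct e as [[_ e]|[_ e]]; [inversion e; subst; auto| discriminate].
    + apply dflt_legal; auto.
  - intros pi H0p [_ Hs]. rewrite Hs by (rewrite H0p; auto).
    unfold hist, sg1. simpl. rewrite H0p.
    destruct (excluded_middle_informative _) as [e|n]; [auto| exfalso; auto].
  - intros Hst. exfalso. apply Hst. eauto.
Qed.

Lemma inv_play (Inv : C -> Prop) : (forall c c', Inv c -> mv c c' -> Inv c') ->
  forall pi n, Inv (pi 0) -> (forall i, i < n -> mv (pi i) (pi (S i))) -> forall i, i <= n -> Inv (pi i).
Proof.
  intros Hinv pi n H0 Hm i. induction i; intros Hi; auto.
  apply (Hinv (pi i)). apply IHi; lia. apply Hm; lia.
Qed.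

Lemma win_seq (Inv : C -> Prop) : (forall c c', Inv c -> mv c c' -> Inv c') ->
  forall c0 X1 B1 X B, Inv c0 -> Win c0 X1 B1 -> (forall c, X c -> X1 c) ->
  (forall c, Inv c -> X1 c -> B1 c -> Win c X B) -> Win c0 X B.
Proof.
  intros Hinv c0 X1 B1 X B Hi0 [sg1 [Hl [Hfin Hinf]]] HXX Hsw.
  apply (win_first c0 sg1 (fun _ c => X1 c)); auto.
  - intros pi n H0p Hs Hav Hn. apply Hsw; auto.
    + apply (inv_play Inv Hinv pi n); auto. rewrite H0p; auto. intros i Hi; apply Hs; auto.
    + apply (Hfin pi n); auto. intros i Hi; apply Hav; auto.
  - intros pi n H0p Hs Hav Hn. split.
    + intros Hx. exfalso. auto.
    + intros _. apply (proj2 (Hfin pi n H0p Hs ltac:(intros i Hi; apply Hav; auto))). auto.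
  - intros pi H0p Hs Hav. apply Hinf; auto. intros i; apply Hav.
Qed.

Lemma win_restrict (Rg : C -> Prop) c0 X1 X B : Win c0 X1 B -> (forall c, X c -> X1 c) ->
  Rg c0 -> (forall c c', Rg c -> ~ X1 c -> mv c c' -> Rg c') ->
  (forall c, Rg c -> X1 c -> X c) -> Win c0 X B.
Proof.
  intros [sg [Hl [Hfin Hinf]]] HXX HR0 HRm HRX. exists sg. split; auto. split.
  - intros pi n H0p Hs HXn.
    assert (HR : forall i, i <= n -> Rg (pi i)).
    { induction i; intros Hi. rewrite H0p; auto.
      apply (HRm (pi i)). apply IHi; lia.
      intros Hx. apply (HXn i). lia. apply HRX; auto. apply IHi; lia.
      apply Hs. lia. }
    destruct (Hfin pi n H0p Hs) as [F1 F2].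
    { intros i Hi Hx. apply (HXn i Hi). apply HRX; auto. apply HR; lia. }
    split; [intros Hx; apply F1, HXX, Hx|].
    intros Hx Hst. apply F2; [intros Hx1; apply Hx; apply HRX; auto|auto].
  - intros pi H0p Hs HXn.
    assert (HR : forall i, Rg (pi i)).
    { induction i. rewrite H0p; auto.
      apply (HRm (pi i)); auto. intros Hx. apply (HXn i). apply HRX; auto. apply Hs. }
    apply Hinf; auto. intros i Hx. apply (HXn i). apply HRX; auto.
Qed.

Definition LoopSw (D : C -> Prop) (h : list C) j :=
  S j < length h /\ D (nth j h d) /\ forall k, j < k -> k < length h -> ~ D (nth k h d).

Definition comp_loop D X1 B1 : strategy := fun h =>
  match excluded_middle_informative (exists j, LoopSw D h j) with
  | left p => let j := proj1_sig (constructive_indefinite_description _ p) in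
              choose_win (nth (S j) h d) X1 B1 (skipn (S j) h)
  | right _ => dflt h end.

Lemma loopsw_uniq D h j j' : LoopSw D h j -> LoopSw D h j' -> j = j'.
Proof.
  intros [L1 [A1 B1]] [L2 [A2 B2]].
  destruct (lt_eq_lt_dec j j') as [[Hl|He]|Hl]; auto.
  - exfalso. exact (B1 j' Hl ltac:(lia) A2).
  - exfalso. exact (B2 j Hl ltac:(lia) A1).
Qed.

Lemma comp_loop_eq D X1 B1 h j : LoopSw D h j ->
  comp_loop D X1 B1 h = choose_win (nth (S j) h d) X1 B1 (skipn (S j) h).
Proof.
  intros Hj. unfold comp_loop.
  destruct (excluded_middle_informative _) as [p|n].
  - destruct (constructive_indefinite_description _ p) as [j' Hj']. simpl.
    rewrite (loopsw_uniq _ _ _ _ Hj' Hj). auto.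
  - exfalso. eauto.
Qed.

Lemma comp_loop_legal D X1 B1 : legal mv adam (comp_loop D X1 B1).
Proof.
  intros h c Ha Hex.
  destruct (classic (exists j, LoopSw D (h ++ [c]) j)) as [[j Hj]|Hn].
  - rewrite (comp_loop_eq _ _ _ _ _ Hj).
    destruct Hj as [Hlen _]. rewrite length_app in Hlen. simpl in Hlen.
    rewrite skipn_snoc by lia. apply (proj1 (choose_win_spec _ X1 B1)); auto.
  - unfold comp_loop. destruct (excluded_middle_informative _) as [p|_].
    + exfalso; auto.
    + apply dflt_legal; auto.
Qed.

Lemma win_loop (Inv : C -> Prop) : (forall c c', Inv c -> mv c c' -> Inv c') ->
  forall (D X X1 B B1 : C -> Prop),
  (forall c, D c -> ~ X c /\ exists c', mv c c') ->
  (forall c c', D c -> Inv c -> mv c c' -> Win c' X1 B1) ->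
  (forall c, X c -> X1 c) ->
  (forall c, Inv c -> X1 c -> B1 c -> (X c /\ B c) \/ D c) ->
  (forall pi, (forall i, ~ X (pi i)) -> (forall n, exists m, n <= m /\ D (pi m)) -> adam_inf pi) ->
  forall c, D c -> Inv c -> Win c X B.
Proof.
  intros Hinv D X X1 B B1 h1 h2 hXX h3 h4 c Dc Ic.
  set (sg := comp_loop D X1 B1).
  assert (F : forall pi j i, D (pi j) -> (forall k, j < k -> k <= S j + i -> ~ D (pi k)) ->
     sg (hist pi (S j + i)) = choose_win (pi (S j)) X1 B1 (hist (fun k => pi (S j + k)) i)).
  { intros pi j i Dj Hk. unfold sg. rewrite (comp_loop_eq D X1 B1 _ j).
    - rewrite nth_hist by lia. rewrite hist_shift by lia. replace (S j + i - S j) with i by lia. auto.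
    - unfold LoopSw. rewrite length_hist. split; [lia|]. rewrite nth_hist by lia. split; auto.
      intros k Hk1 Hk2. rewrite nth_hist by lia. apply Hk; lia. }
  exists sg. split; [apply comp_loop_legal|split].
  - intros pi n H0p Hst HX.
    assert (HI : forall i, i <= n -> Inv (pi i)).
    { apply (inv_play Inv Hinv pi n). rewrite H0p; auto. intros i Hi; apply Hst; auto. }
    destruct (classic (D (pi n))) as [Dn|nDn].
    { destruct (h1 _ Dn) as [nX [c' Hc']]. split; [intros Hx; exfalso; auto|].
      intros _ Hs. exfalso. apply Hs. eauto. }
    destruct (max_ex (fun k => k <= n /\ D (pi k)) n) as [j [[Hjn Dj] Hmax]].
    { split; [lia| rewrite H0p; auto]. }
    { intros k [Hk _]; auto. }
    assert (Hjn' : j < n). { destruct (Nat.eq_dec j n); [subst; contradiction|lia]. }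
    assert (Hnd : forall k, j < k -> k <= n -> ~ D (pi k)).
    { intros k Hk1 Hk2 Dk. specialize (Hmax k (conj Hk2 Dk)). lia. }
    assert (Hw : Win (pi (S j)) X1 B1).
    { apply (h2 (pi j)); auto. apply Hst; auto. }
    destruct (proj2 (choose_win_spec (pi (S j)) X1 B1) Hw) as [_ [Hfin _]].
    set (pi' := fun k => pi (S j + k)).
    assert (Hst' : forall i, i < n - S j -> stp (choose_win (pi (S j)) X1 B1) pi' i).
    { intros i Hi. apply stp_tail with (sg := sg). apply Hst; lia. apply F; [auto|].
      intros k Hk1 Hk2. apply Hnd; lia. }
    assert (H0' : pi' 0 = pi (S j)). { unfold pi'. rewrite Nat.add_0_r. auto. }
    assert (HnoX1 : forall i, i < n - S j -> ~ X1 (pi' i)).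
    { intros i Hi Hx.
      destruct (min_ex (fun i => i < n - S j /\ X1 (pi' i))) as [i0 [[Hi0 Hx0] Hmin]]; eauto.
      destruct (Hfin pi' i0 H0') as [G1 _].
      { intros i1 Hi1. apply Hst'. lia. }
      { intros i1 Hi1 Hx1. apply (Hmin i1 Hi1). split; auto; lia. }
      destruct (h3 (pi' i0)) as [[Hx' _]|Dd]; auto.
      - unfold pi'. apply HI. lia.
      - apply (HX (S j + i0)). lia. auto.
      - apply (Hnd (S j + i0)); auto; lia. }
    destruct (Hfin pi' (n - S j) H0' Hst' HnoX1) as [G1 G2].
    unfold pi' in G1, G2. replace (S j + (n - S j)) with n in G1, G2 by lia.
    split.
    + intros Hx. destruct (h3 (pi n)) as [[_ Hb]|Dd]; auto. contradiction.
    + intros Hx Hs. apply G2; auto. intros Hx1.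
      destruct (h3 (pi n)) as [[Hx' _]|Dd]; auto.
  - intros pi H0p Hst HX.
    assert (HI : forall i, Inv (pi i)).
    { intros i. apply (inv_play Inv Hinv pi i). rewrite H0p; auto. intros k Hk; apply Hst; auto. lia. }
    destruct (classic (forall n, exists m, n <= m /\ D (pi m))) as [Hio|Hnio].
    { apply h4; auto. }
    apply not_all_ex_not in Hnio. destruct Hnio as [N HN].
    assert (HN' : forall m, N <= m -> ~ D (pi m)). { intros m Hm Dm. apply HN. eauto. }
    destruct (max_ex (fun k => D (pi k)) N) as [j [Dj Hmax]].
    { rewrite H0p; auto. }
    { intros k Dk. destruct (le_lt_dec N k); auto. exfalso. apply (HN' k); auto. lia. }
    assert (Hnd : forall k, j < k -> ~ D (pi k)).
    { intros k Hk Dk. specialize (Hmax k Dk). lia. }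
    assert (Hw : Win (pi (S j)) X1 B1).
    { apply (h2 (pi j)); auto. apply Hst. }
    destruct (proj2 (choose_win_spec (pi (S j)) X1 B1) Hw) as [_ [Hfin Hinf]].
    set (pi' := fun k => pi (S j + k)).
    assert (Hst' : forall i, stp (choose_win (pi (S j)) X1 B1) pi' i).
    { intros i. apply stp_tail with (sg := sg). apply Hst. apply F; [auto|].
      intros k Hk1 Hk2. apply Hnd; lia. }
    assert (H0' : pi' 0 = pi (S j)). { unfold pi'. rewrite Nat.add_0_r. auto. }
    assert (HnoX1 : forall i, ~ X1 (pi' i)).
    { intros i Hx.
      destruct (min_ex (fun i => X1 (pi' i))) as [i0 [Hx0 Hmin]]; eauto.
      destruct (Hfin pi' i0 H0') as [G1 _].
      { intros i1 Hi1. apply Hst'. }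
      { intros i1 Hi1 Hx1. apply (Hmin i1 Hi1). auto. }
      destruct (h3 (pi' i0)) as [[Hx' _]|Dd]; auto.
      - unfold pi'. apply HI.
      - apply (HX (S j + i0)). auto.
      - apply (Hnd (S j + i0)); auto; lia. }
    apply (shift_inf pi (S j)). apply Hinf; auto.
Qed.

End Gen.

Set Implicit Arguments.

Section Syn.
Context {L : Type}.
Implicit Types f g h k t b : form L.

Lemma Sub_trans f g h : Sub f g -> Sub g h -> Sub f h.
Proof. intros H1 H2. induction H1; eauto using Sub. Qed.

Lemma Sub_var_inv x t : Sub (FVar x) t -> t = FVar x.
Proof. intros H. inversion H; auto. Qed.

Lemma Sub_split f g : Sub f g -> exists l1 l2, binders f = l1 ++ binders g ++ l2.
Proof.
  intros H. induction H; simpl.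
  1: (exists [], []; rewrite app_nil_r; auto).
  all: try (destruct IHSub as [l1 [l2 E]]; rewrite E).
  all: try (exists l1, l2; auto; fail).
  - exists l1, (l2 ++ binders f2). repeat rewrite <- app_assoc. auto.
  - exists (binders f1 ++ l1), l2. repeat rewrite <- app_assoc. auto.
  - exists l1, (l2 ++ binders f2). repeat rewrite <- app_assoc. auto.
  - exists (binders f1 ++ l1), l2. repeat rewrite <- app_assoc. auto.
  - exists (z :: l1), l2. auto.
  - exists (z :: l1), l2. auto.
Qed.

Lemma Sub_incl f g y : Sub f g -> In y (binders g) -> In y (binders f).
Proof.
  intros H Hy. destruct (Sub_split H) as [l1 [l2 E]]. rewrite E.
  apply in_or_app. right. apply in_or_app. auto.
Qed.

Lemma Sub_NoDup f g : Sub f g -> NoDup (binders f) -> NoDup (binders g).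
Proof.
  intros H Hn. destruct (Sub_split H) as [l1 [l2 E]]. rewrite E in Hn.
  apply NoDup_app_remove_l in Hn. apply NoDup_app_remove_r in Hn. auto.
Qed.

Lemma NoDup_app_disj (l1 l2 : list var) x : NoDup (l1 ++ l2) -> In x l1 -> In x l2 -> False.
Proof.
  induction l1; simpl; intros Hn H1 H2; auto.
  inversion Hn; subst. destruct H1 as [<-|H1].
  - apply H3. apply in_or_app. auto.
  - eauto.
Qed.

Definition isb (z : var) b := exists g, b = FMu z g \/ b = FNu z g.

Lemma binder_in psi b z : Sub psi b -> isb z b -> In z (binders psi).
Proof.
  intros H [g [->| ->]]; apply (Sub_incl z H); simpl; auto.
Qed.

Lemma in_binders_ex psi z : In z (binders psi) -> exists b, Sub psi b /\ isb z b.
Proof.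
  induction psi; simpl; intros Hz; try contradiction.
  all: try (destruct (IHpsi Hz) as [b [Hb Hi]]; exists b; split; [constructor; auto|auto]; fail).
  - apply in_app_or in Hz. destruct Hz as [Hz|Hz].
    + destruct (IHpsi1 Hz) as [b [Hb Hi]]. exists b. split; [apply Sub_AndL|]; auto.
    + destruct (IHpsi2 Hz) as [b [Hb Hi]]. exists b. split; [apply Sub_AndR|]; auto.
  - apply in_app_or in Hz. destruct Hz as [Hz|Hz].
    + destruct (IHpsi1 Hz) as [b [Hb Hi]]. exists b. split; [apply Sub_OrL|]; auto.
    + destruct (IHpsi2 Hz) as [b [Hb Hi]]. exists b. split; [apply Sub_OrR|]; auto.
  - destruct Hz as [<-|Hz].
    + exists (FMu v psi). split; [constructor|exists psi; auto].
    + destruct (IHpsi Hz) as [b [Hb Hi]]. exists b. split; [apply Sub_Mu|]; auto.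
  - destruct Hz as [<-|Hz].
    + exists (FNu v psi). split; [constructor|exists psi; auto].
    + destruct (IHpsi Hz) as [b [Hb Hi]]. exists b. split; [apply Sub_Nu|]; auto.
Qed.

Lemma binder_uniq f z b1 b2 : NoDup (binders f) -> Sub f b1 -> Sub f b2 ->
  isb z b1 -> isb z b2 -> b1 = b2.
Proof.
  revert b1 b2. induction f; intros b1 b2 Hn H1 H2 I1 I2; simpl in Hn.
  all: try (destruct I1 as [g1 [E1|E1]]; subst; inversion H1; fail).
  all: try (inversion H1; subst; [destruct I1 as [? [E|E]]; discriminate|];
            inversion H2; subst; [destruct I2 as [? [E|E]]; discriminate|]; eauto; fail).
  - inversion H1; subst; [destruct I1 as [? [E|E]]; discriminate| |];
    inversion H2; subst; try (destruct I2 as [? [E|E]]; discriminate).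
    + apply IHf1; auto. eapply NoDup_app_remove_r; eauto.
    + exfalso. apply (@NoDup_app_disj _ _ z Hn); eapply binder_in; eauto.
    + exfalso. apply (@NoDup_app_disj _ _ z Hn); eapply binder_in; eauto.
    + apply IHf2; auto. eapply NoDup_app_remove_l; eauto.
  - inversion H1; subst; [destruct I1 as [? [E|E]]; discriminate| |];
    inversion H2; subst; try (destruct I2 as [? [E|E]]; discriminate).
    + apply IHf1; auto. eapply NoDup_app_remove_r; eauto.
    + exfalso. apply (@NoDup_app_disj _ _ z Hn); eapply binder_in; eauto.
    + exfalso. apply (@NoDup_app_disj _ _ z Hn); eapply binder_in; eauto.
    + apply IHf2; auto. eapply NoDup_app_remove_l; eauto.
  - inversion Hn; subst.
    inversion H1; subst; inversion H2; subst; auto.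
    + exfalso. destruct I1 as [g [E|E]]; inversion E; subst. apply H3. eapply binder_in; eauto.
    + exfalso. destruct I2 as [g [E|E]]; inversion E; subst. apply H3. eapply binder_in; eauto.
  - inversion Hn; subst.
    inversion H1; subst; inversion H2; subst; auto.
    + exfalso. destruct I1 as [g [E|E]]; inversion E; subst. apply H3. eapply binder_in; eauto.
    + exfalso. destruct I2 as [g [E|E]]; inversion E; subst. apply H3. eapply binder_in; eauto.
Qed.

Lemma occ_sub_lift phi f y p : Sub phi f -> occ y p f ->
  (exists p', occ y p' phi) \/ exists b k, Sub phi b /\ (b = FMu y k \/ b = FNu y k) /\ Sub k f.
Proof.
  intros H. revert p. induction H; intros p Ho.
  1: (left; eauto).
  all: try (destruct (IHSub p Ho) as [[p' Hp]|[b [k [Hb [Eb Hk]]]]];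
    [left; eexists; constructor; eauto; fail
    |right; exists b, k; split; [constructor; auto|auto]]; fail).
  - destruct (IHSub p Ho) as [[p' Hp]|[b [k [Hb [Eb Hk]]]]].
    + destruct (Nat.eq_dec z y) as [<-|Hne].
      * right. exists (FMu z f), f. split; [constructor|split; auto].
      * left. exists p'. constructor; auto.
    + right. exists b, k. split; [constructor; auto|auto].
  - destruct (IHSub p Ho) as [[p' Hp]|[b [k [Hb [Eb Hk]]]]].
    + destruct (Nat.eq_dec z y) as [<-|Hne].
      * right. exists (FNu z f), f. split; [constructor|split; auto].
      * left. exists p'. constructor; auto.
    + right. exists b, k. split; [constructor; auto|auto].
Qed.

Lemma scope phi f y p : NoDup (binders phi) ->
  (forall z p, occ z p phi -> ~ In z (binders phi)) ->
  Sub phi f -> occ y p f -> In y (binders f) -> False.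
Proof.
  intros Hn Hfree Hs Ho Hi.
  destruct (occ_sub_lift Hs Ho) as [[p' Hp]|[b [k [Hb [Eb Hk]]]]].
  - apply (Hfree y p' Hp). eapply Sub_incl; eauto.
  - assert (Hnb : NoDup (binders b)) by (eapply Sub_NoDup; eauto).
    destruct Eb as [->| ->]; simpl in Hnb; inversion Hnb; subst; apply H1; eapply Sub_incl; eauto.
Qed.

Lemma free_of_sub g y : Sub g (FVar y) -> ~ In y (binders g) -> exists p, occ y p g.
Proof.
  intros H. remember (FVar y) as t eqn:Et. revert Et.
  induction H; intros Et Hn; subst; simpl in Hn.
  1: (exists false; constructor).
  all: try (destruct IHSub as [p Hp]; auto; eexists; constructor; eauto; fail).
  all: try (destruct IHSub as [p Hp]; auto; [intros Hi; apply Hn; apply in_or_app; auto|];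
            eexists; constructor; eauto; fail).
Qed.

Lemma neg_var_lemma f t : Sub f t -> forall y, t = FNeg (FVar y) ->
  (forall g, Sub f (FNeg g) -> exists z, g = FVar z) ->
  occ y true f \/ exists k, (Sub f (FMu y k) \/ Sub f (FNu y k)) /\ occ y true k.
Proof.
  intros H. induction H; intros y Et Hneg; subst.
  1: (left; change true with (negb false); constructor; constructor).
  1: (destruct (Hneg f (Sub_refl _)) as [x ->]; apply Sub_var_inv in H; discriminate).
  all: try (destruct (IHSub y eq_refl) as [Ho|[k [Hk Ho]]];
    [intros g Hg; apply Hneg; constructor; auto
    |left; constructor; auto
    |right; exists k; split; auto; destruct Hk; [left|right]; constructor; auto]; fail).
  - destruct (IHSub y eq_refl) as [Ho|[k [Hk Ho]]].
    + intros g Hg; apply Hneg; constructor; auto.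
    + destruct (Nat.eq_dec z y) as [<-|Hne].
      * right. exists f. split; [left; constructor|auto].
      * left. constructor; auto.
    + right; exists k; split; auto; destruct Hk; [left|right]; constructor; auto.
  - destruct (IHSub y eq_refl) as [Ho|[k [Hk Ho]]].
    + intros g Hg; apply Hneg; constructor; auto.
    + destruct (Nat.eq_dec z y) as [<-|Hne].
      * right. exists f. split; [right; constructor|auto].
      * left. constructor; auto.
    + right; exists k; split; auto; destruct Hk; [left|right]; constructor; auto.
Qed.

End Syn.

Unset Implicit Arguments.

Section Mono.
Context {S L : Type} (s0 : S) (T : @trans S L -> Prop) (I : @trans S L -> @trans S L -> Prop).

Lemma lfp_mono (F F' : pset -> pset) : (forall Q H, F Q H -> F' Q H) ->
  forall H, lfp T I F H -> lfp T I F' H.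
Proof.
  intros HF H [Hp Hl]. split; auto. intros Q HQ Hpre. apply Hl; auto.
Qed.

Lemma lfp_fix (F : pset -> pset) :
  (forall Q Q', (forall H, Q H -> Q' H) -> forall H, F Q H -> F Q' H) ->
  forall H, is_proc T I H -> F (lfp T I F) H -> lfp T I F H.
Proof.
  intros Hm H Hp HF. split; auto. intros Q HQ Hpre. apply Hpre.
  apply (Hm (lfp T I F)); auto. intros H' [_ Hl]. apply Hl; auto.
Qed.

Lemma sem_mono (f : form L) : forall V V' : valuation,
  (forall y H, (occ y false f -> V y H -> V' y H) /\ (occ y true f -> V' y H -> V y H)) ->
  forall H, sem s0 T I f V H -> sem s0 T I f V' H.
Proof.
  induction f; intros V1 V2 Hv H; simpl.
  - apply (proj1 (Hv v H)). constructor.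
  - intros [Hp Hn]. split; auto. intros Hs. apply Hn. revert Hs. apply IHf.
    intros y H'. split; intros Ho.
    + apply (proj2 (Hv y H')). apply (occ_Neg (p:=false)) in Ho. exact Ho.
    + apply (proj1 (Hv y H')). apply (occ_Neg (p:=true)) in Ho. exact Ho.
  - intros [A B]. split; [revert A; apply IHf1|revert B; apply IHf2];
    intros y H'; split; intros Ho; first [apply (proj1 (Hv y H')) | apply (proj2 (Hv y H'))]; eauto using occ.
  - intros [Hp Hn]. split; auto. intros [[_ A] [_ B]]. apply Hn.
    split; split; auto; intros Hs; [apply A; revert Hs; apply IHf1|apply B; revert Hs; apply IHf2];
    intros y H'; split; intros Ho; first [apply (proj1 (Hv y H')) | apply (proj2 (Hv y H'))]; eauto using occ.
  - intros [Hp [r [Hr [Hl [Hc Hs]]]]]. split; auto. exists r. refine (conj Hr (conj Hl (conj Hc _))).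
    revert Hs. apply IHf. intros y H'; split; intros Ho; first [apply (proj1 (Hv y H')) | apply (proj2 (Hv y H'))]; eauto using occ.
  - intros [Hp Hn]. split; auto. intros [_ [r [Hr [Hl [Hc [Hp' Hs]]]]]]. apply Hn.
    split; auto. exists r. refine (conj Hr (conj Hl (conj Hc (conj Hp' _)))). intros Hs'. apply Hs. revert Hs'. apply IHf.
    intros y H'; split; intros Ho; first [apply (proj1 (Hv y H')) | apply (proj2 (Hv y H'))]; eauto using occ.
  - intros [Hp [r [Hr [Hl [Hc Hs]]]]]. split; auto. exists r. refine (conj Hr (conj Hl (conj Hc _))).
    revert Hs. apply IHf. intros y H'; split; intros Ho; first [apply (proj1 (Hv y H')) | apply (proj2 (Hv y H'))]; eauto using occ.
  - intros [Hp Hn]. split; auto. intros [_ [r [Hr [Hl [Hc [Hp' Hs]]]]]]. apply Hn.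
    split; auto. exists r. refine (conj Hr (conj Hl (conj Hc (conj Hp' _)))). intros Hs'. apply Hs. revert Hs'. apply IHf.
    intros y H'; split; intros Ho; first [apply (proj1 (Hv y H')) | apply (proj2 (Hv y H'))]; eauto using occ.
  - intros [Hp [M [HM [Hsq Hs]]]]. split; auto. exists M. refine (conj HM (conj Hsq _)).
    revert Hs. apply IHf. intros y H'; split; intros Ho; first [apply (proj1 (Hv y H')) | apply (proj2 (Hv y H'))]; eauto using occ.
  - intros [Hp Hn]. split; auto. intros [_ [M [HM [Hsq [Hp' Hs]]]]]. apply Hn.
    split; auto. exists M. refine (conj HM (conj Hsq (conj Hp' _))). intros Hs'. apply Hs. revert Hs'. apply IHf.
    intros y H'; split; intros Ho; first [apply (proj1 (Hv y H')) | apply (proj2 (Hv y H'))]; eauto using occ.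
  - apply lfp_mono. intros Q H'. apply IHf. intros y H''. unfold upd.
    destruct (Nat.eqb_spec y v) as [->|Hne]; [tauto|].
    split; intros Ho; first [apply (proj1 (Hv y H'')) | apply (proj2 (Hv y H''))]; eauto using occ.
  - intros [Hp Hn]. split; auto. intros Hl. apply Hn. revert Hl. apply lfp_mono.
    intros Q H' [Hp' Hs]. split; auto. intros Hs'. apply Hs. revert Hs'. apply IHf.
    intros y H''. unfold upd.
    destruct (Nat.eqb_spec y v) as [->|Hne]; [tauto|].
    split; intros Ho; first [apply (proj1 (Hv y H'')) | apply (proj2 (Hv y H''))]; eauto using occ.
Qed.

End Mono.


Section Main.
Context {S L : Type} (s0 : S) (T : @trans S L -> Prop) (I : @trans S L -> @trans S L -> Prop)
  (V : @valuation S L) (phi : form L).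
Context (Htfl : TFL_formula phi) (Hpnf : PNF phi).

Definition cfg := (@process S L * form L)%type.
Definition mvG : cfg -> cfg -> Prop := mc_move s0 T I phi.
Definition cd : cfg := ((fun _ => False, None), FVar 0).
Definition InvG (c : cfg) := is_proc T I (fst c).
Definition Xf (psi : form L) (c : cfg) := exists y, snd c = FVar y /\ ~ In y (binders psi).
Definition Bv (E : @valuation S L) (c : cfg) := forall y, snd c = FVar y -> ~ E y (fst c).
Definition WinG c X B := Win cfg mvG mc_adam (mc_adam_end V) (mc_adam_inf phi) c X B.

Lemma shift_mc : forall (pi : nat -> cfg) j, mc_adam_inf phi (fun k => pi (j + k)) -> mc_adam_inf phi pi.
Proof.
  intros pi j [z [chi [Hio [Hb [Hmu Hout]]]]]. exists z, chi.
  refine (conj _ (conj Hb (conj Hmu _))).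
  - intros n. destruct (Hio n) as [m [Hm E]]. exists (j + m). split; [lia|auto].
  - intros y chiy Hy Hby. apply (Hout y); auto. intros n. destruct (Hy (j + n)) as [m [Hm E]].
    exists (m - j). split; [lia|]. replace (j + (m - j)) with m by lia. auto.
Qed.

Lemma gexit c X B : X c -> B c -> WinG c X B.
Proof. intros. eapply (win_exit _ cd); eauto. Qed.

Lemma geve c0 X B : ~ X c0 -> ~ mc_adam c0 -> (stuck mvG c0 -> mc_adam_end V c0) ->
  (forall c1, mvG c0 c1 -> WinG c1 X B) -> WinG c0 X B.
Proof. intros. eapply (win_eve _ cd); eauto. exact shift_mc. Qed.

Lemma gadam c0 c1 X B : ~ X c0 -> mc_adam c0 -> mvG c0 c1 -> WinG c1 X B -> WinG c0 X B.
Proof. intros. eapply (win_adam _ cd); eauto. exact shift_mc. Qed.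

Lemma mv_inv c c' : InvG c -> mvG c c' -> InvG c'.
Proof.
  intros Hp Hm. unfold InvG in *. inversion Hm; subst; simpl in *; auto.
  all: try (destruct Hp as [HX HA]; split; [left; exists (tgt r); intros t'; tauto|];
    simpl; destruct HX as [[s Hs]|[_ [s [Hsub _]]]];
    [apply (proj1 (proj1 (Hs r) H))|apply (proj1 (Hsub r H))]).
  all: destruct Hp as [HX HA]; split; auto.
Qed.

Lemma gseq c0 X1 B1 X B : InvG c0 -> WinG c0 X1 B1 -> (forall c, X c -> X1 c) ->
  (forall c, InvG c -> X1 c -> B1 c -> WinG c X B) -> WinG c0 X B.
Proof. intros. eapply (win_seq _ cd _ _ _ _ shift_mc InvG mv_inv); eauto. Qed.

Lemma gloop (D X X1 B B1 : cfg -> Prop) :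
  (forall c, D c -> ~ X c /\ exists c', mvG c c') ->
  (forall c c', D c -> InvG c -> mvG c c' -> WinG c' X1 B1) ->
  (forall c, X c -> X1 c) ->
  (forall c, InvG c -> X1 c -> B1 c -> (X c /\ B c) \/ D c) ->
  (forall pi, (forall i, ~ X (pi i)) -> (forall n, exists m, n <= m /\ D (pi m)) -> mc_adam_inf phi pi) ->
  forall c, D c -> InvG c -> WinG c X B.
Proof. intros. eapply (win_loop _ cd _ _ _ _ shift_mc InvG mv_inv); eauto. Qed.

Lemma grestrict (Rg : cfg -> Prop) c0 X1 X B : WinG c0 X1 B -> (forall c, X c -> X1 c) ->
  Rg c0 -> (forall c c', Rg c -> ~ X1 c -> mvG c c' -> Rg c') ->
  (forall c, Rg c -> X1 c -> X c) -> WinG c0 X B.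
Proof. intros. eapply win_restrict; eauto. Qed.

Definition Rg (g : form L) (c : cfg) := Sub g (snd c) \/ exists y, snd c = FVar y /\ In y (binders g).

Lemma var_move H z b g c' : mvG (H, FVar z) c' -> Sub phi b -> (b = FMu z g \/ b = FNu z g) -> c' = (H, g).
Proof.
  intros Hm Hb Eb. destruct Hpnf as [_ [Hnd _]].
  inversion Hm; subst.
  assert (E : (match b with FMu _ k | FNu _ k => k | _ => b end) = g) by (destruct Eb; subst; auto).
  destruct H4 as [H4|H4].
  - assert (FMu z g0 = b) by (apply (binder_uniq (z:=z) Hnd H4 Hb); [exists g0; auto| destruct Eb; exists g; auto]).
    subst b. simpl in E. subst. auto.
  - assert (FNu z g0 = b) by (apply (binder_uniq (z:=z) Hnd H4 Hb); [exists g0; auto| destruct Eb; exists g; auto]).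
    subst b. simpl in E. subst. auto.
Qed.

Lemma rg_pres g : Sub phi g -> forall c c', Rg g c -> ~ Xf g c -> mvG c c' -> Rg g c'.
Proof.
  intros Hg c c' HR HX Hm. destruct Hpnf as [_ [Hnd _]]. unfold Rg in *.
  inversion Hm; subst; simpl in *.
  all: try (destruct HR as [HR|[y [Ey _]]]; [|discriminate]).
  all: try (left; eapply Sub_trans; [exact HR|]; eauto using Sub; fail).
  - right. exists z. split; auto. eapply binder_in; [exact HR|exists g0; auto].
  - right. exists z. split; auto. eapply binder_in; [exact HR|exists g0; auto].
  - assert (Hin : In z (binders g)).
    { apply NNPP. intros Hn. apply HX. exists z. auto. }
    destruct (in_binders_ex _ _ Hin) as [b [Hb Ib]].
    assert (Hb' : Sub phi b) by (eapply Sub_trans; eauto).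
    left. destruct H0 as [H0|H0].
    + assert (b = FMu z g0) by (apply (binder_uniq (z:=z) Hnd Hb' H0); auto; exists g0; auto).
      subst. eapply Sub_trans; [exact Hb|]. eauto using Sub.
    + assert (b = FNu z g0) by (apply (binder_uniq (z:=z) Hnd Hb' H0); auto; exists g0; auto).
      subst. eapply Sub_trans; [exact Hb|]. eauto using Sub.
Qed.

Lemma rg_exit P g c : Sub phi P -> (forall y p, occ y p g -> occ y p P) ->
  Rg g c -> Xf g c -> Xf P c.
Proof.
  intros HP Hocc HR [y [Ey Hy]]. destruct Hpnf as [_ [Hnd Hfree]].
  exists y. split; auto. unfold Rg in HR. rewrite Ey in HR.
  destruct HR as [HR|[y' [E' Hy']]]; [|injection E' as <-; contradiction].
  destruct (free_of_sub HR Hy) as [p Hp]. intros Hin.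
  apply (scope Hnd Hfree HP (Hocc y p Hp) Hin).
Qed.

Lemma xf_stuck c : Xf phi c -> ~ exists c', mvG c c'.
Proof.
  intros [y [Ey Hy]] [c' Hm]. destruct c as [H f]. simpl in Ey. subst f.
  inversion Hm; subst. apply Hy. destruct H4 as [H4|H4]; eapply binder_in; eauto; exists g; auto.
Qed.

Lemma HE_upd (E : @valuation S L) v Q : In v (binders phi) ->
  (forall y, ~ In y (binders phi) -> E y = V y) ->
  (forall y, ~ In y (binders phi) -> upd E v Q y = V y).
Proof.
  intros Hv HE y Hy. unfold upd. destruct (Nat.eqb_spec y v) as [->|_]; [contradiction|auto].
Qed.

Lemma mono_body v psi (E : @valuation S L) : Sub phi (FMu v psi) \/ Sub phi (FNu v psi) ->
  forall Q Q' : pset, (forall H, Q H -> Q' H) ->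
  forall H, sem s0 T I psi (upd E v Q) H -> sem s0 T I psi (upd E v Q') H.
Proof.
  intros Hb Q Q' HQ. apply sem_mono. intros y H. unfold upd.
  destruct (Nat.eqb_spec y v) as [->|_].
  - split; auto. intros Ho. exfalso. exact (Htfl v psi Hb Ho).
  - split; auto.
Qed.

Ltac noX := let y := fresh in let E := fresh in intros [y [E _]]; discriminate.

Lemma claim : forall psi, Sub phi psi -> forall E, (forall y, ~ In y (binders phi) -> E y = V y) ->
  forall H, is_proc T I H -> ~ sem s0 T I psi E H -> WinG (H, psi) (Xf psi) (Bv E).
Proof.
  pose proof Hpnf as [Hneg [Hnd Hfree]].
  induction psi; intros Hsub E HE H Hp Hs.
  -
    apply gexit. exists v; split; auto. intros y Ey. simpl in Ey. injection Ey as <-. auto.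
  -
    destruct (Hneg psi Hsub) as [y ->].
    assert (Hy : ~ In y (binders phi)).
    { destruct (@neg_var_lemma L phi _ Hsub y eq_refl Hneg) as [Ho|[k [Hk Ho]]].
      - exact (Hfree y true Ho).
      - exfalso. exact (Htfl y k Hk Ho). }
    apply geve; [noX| unfold mc_adam; simpl; tauto| |].
    + intros _. unfold mc_adam_end; simpl. rewrite <- (HE y Hy). apply NNPP. intros Hn. apply Hs. split; auto.
    + intros c1 Hm. inversion Hm.
  -
    simpl in Hs. apply not_and_or in Hs. destruct Hs as [Hs|Hs].
    + apply gadam with (c1 := (H, psi1)); [noX| (unfold mc_adam; simpl; trivial)| constructor|].
      apply grestrict with (Rg := Rg psi1) (X1 := Xf psi1).
      * apply IHpsi1; auto. eapply Sub_trans; eauto using Sub.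
      * intros c [y [Ey Hy]]. exists y. split; auto. intros Hi. apply Hy. simpl. apply in_or_app; auto.
      * left. constructor.
      * apply rg_pres. eapply Sub_trans; eauto using Sub.
      * intros c. apply rg_exit; auto. intros; constructor; auto.
    + apply gadam with (c1 := (H, psi2)); [noX| (unfold mc_adam; simpl; trivial)| constructor|].
      apply grestrict with (Rg := Rg psi2) (X1 := Xf psi2).
      * apply IHpsi2; auto. eapply Sub_trans; eauto using Sub.
      * intros c [y [Ey Hy]]. exists y. split; auto. intros Hi. apply Hy. simpl. apply in_or_app; auto.
      * left. constructor.
      * apply rg_pres. eapply Sub_trans; eauto using Sub.
      * intros c. apply rg_exit; auto. intros; apply occ_AndR; auto.
  -
    assert (Hb : pcompl T I (sem s0 T I psi1 E) H /\ pcompl T I (sem s0 T I psi2 E) H).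
    { apply NNPP. intros Hn. apply Hs. split; auto. }
    destruct Hb as [[_ Hs1] [_ Hs2]].
    apply geve; [noX| unfold mc_adam; simpl; tauto| intros Hst; exfalso; apply Hst; eexists; apply mv_orL|].
    intros c1 Hm. inversion Hm; subst.
    + apply grestrict with (Rg := Rg psi1) (X1 := Xf psi1).
      * apply IHpsi1; auto. eapply Sub_trans; eauto using Sub.
      * intros c [y [Ey Hy]]. exists y. split; auto. intros Hi. apply Hy. simpl. apply in_or_app; auto.
      * left. constructor.
      * apply rg_pres. eapply Sub_trans; eauto using Sub.
      * intros c. apply rg_exit; auto. intros; constructor; auto.
    + apply grestrict with (Rg := Rg psi2) (X1 := Xf psi2).
      * apply IHpsi2; auto. eapply Sub_trans; eauto using Sub.
      * intros c [y [Ey Hy]]. exists y. split; auto. intros Hi. apply Hy. simpl. apply in_or_app; auto.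
      * left. constructor.
      * apply rg_pres. eapply Sub_trans; eauto using Sub.
      * intros c. apply rg_exit; auto. intros; apply occ_OrR; auto.
  -
    apply geve; [noX| unfold mc_adam; simpl; tauto| intros _; unfold mc_adam_end; simpl; trivial|].
    intros c1 Hm. match goal with Hm : mvG ?c0 c1 |- _ => assert (Hp1 : InvG c1) by (apply (mv_inv c0); [exact Hp|exact Hm]) end. inversion Hm; subst.
    apply IHpsi; auto. eapply Sub_trans; eauto using Sub.
    intros Hs1. apply Hs. split; auto. exists r. auto.
  -
    assert (Hd : dia_c s0 T I l (pcompl T I (sem s0 T I psi E)) H).
    { apply NNPP. intros Hn. apply Hs. split; auto. }
    destruct Hd as [_ [r [Hr [Hl [Hc [Hp1 Hs1]]]]]].
    destruct H as [R t].
    apply gadam with (c1 := ((Xs T (tgt r), Some r), psi)); [noX| (unfold mc_adam; simpl; trivial)| apply mv_boxc; auto|].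
    apply IHpsi; auto. eapply Sub_trans; eauto using Sub.
  -
    apply geve; [noX| unfold mc_adam; simpl; tauto| intros _; unfold mc_adam_end; simpl; trivial|].
    intros c1 Hm. match goal with Hm : mvG ?c0 c1 |- _ => assert (Hp1 : InvG c1) by (apply (mv_inv c0); [exact Hp|exact Hm]) end. inversion Hm; subst.
    apply IHpsi; auto. eapply Sub_trans; eauto using Sub.
    intros Hs1. apply Hs. split; auto. exists r. auto.
  -
    assert (Hd : dia_nc T I l (pcompl T I (sem s0 T I psi E)) H).
    { apply NNPP. intros Hn. apply Hs. split; auto. }
    destruct Hd as [_ [r [Hr [Hl [Hc [Hp1 Hs1]]]]]].
    destruct H as [R t].
    apply gadam with (c1 := ((Xs T (tgt r), Some r), psi)); [noX| (unfold mc_adam; simpl; trivial)| apply mv_boxnc; auto|].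
    apply IHpsi; auto. eapply Sub_trans; eauto using Sub.
  -
    apply geve; [noX| unfold mc_adam; simpl; tauto| intros _; unfold mc_adam_end; simpl; trivial|].
    intros c1 Hm. match goal with Hm : mvG ?c0 c1 |- _ => assert (Hp1 : InvG c1) by (apply (mv_inv c0); [exact Hp|exact Hm]) end. inversion Hm; subst.
    apply IHpsi; auto. eapply Sub_trans; eauto using Sub.
    intros Hs1. apply Hs. split; auto. exists M. auto.
  -
    assert (Hd : dia_o T I (pcompl T I (sem s0 T I psi E)) H).
    { apply NNPP. intros Hn. apply Hs. split; auto. }
    destruct Hd as [_ [M [HM [Hsq [Hp1 Hs1]]]]].
    destruct H as [R t].
    apply gadam with (c1 := ((M, t), psi)); [noX| (unfold mc_adam; simpl; trivial)| apply mv_boxo; auto|].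
    apply IHpsi; auto. eapply Sub_trans; eauto using Sub.
  -
    set (F := fun Q => sem s0 T I psi (upd E v Q)). simpl in Hs. fold F in Hs.
    assert (Hv : In v (binders phi)) by (eapply binder_in; [exact Hsub| exists psi; auto]).
    assert (Hbody : Sub phi psi) by (eapply Sub_trans; eauto using Sub).
    apply geve; [noX| unfold mc_adam; simpl; tauto| intros Hst; exfalso; apply Hst; eexists; apply mv_mu|].
    intros c1 Hm. inversion Hm; subst.
    apply gloop with (D := fun c => exists H', c = (H', FVar v) /\ ~ lfp T I F H')
      (X1 := Xf psi) (B1 := Bv (upd E v (lfp T I F))).
    + intros c [H' [-> _]]. split.
      * intros [y [Ey Hy]]. simpl in Ey. injection Ey as <-. apply Hy. simpl; auto.
      * eexists. apply mv_var. left; exact Hsub.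
    + intros c c' [H' [-> nL]] Hi Hm'.
      rewrite (var_move _ _ _ _ _ Hm' Hsub (or_introl eq_refl)).
      apply IHpsi; auto. apply HE_upd; auto.
      intros Hs'. apply nL. apply lfp_fix; auto.
      intros Q Q' HQ. apply (mono_body v psi E (or_introl Hsub)); auto.
    + intros c [y [Ey Hy]]. exists y. split; auto. intros Hi. apply Hy. simpl; auto.
    + intros [H' f] Hi [y [Ey Hy]] HB. simpl in Ey. subst f.
      destruct (Nat.eq_dec y v) as [->|Hne].
      * right. exists H'. split; auto. specialize (HB v eq_refl). simpl in HB.
        unfold upd in HB. rewrite Nat.eqb_refl in HB. auto.
      * left. split.
        -- exists y. split; auto. simpl. intros [E'|Hi']; auto.
        -- intros y' Ey'. simpl in Ey'. injection Ey' as <-. specialize (HB y eq_refl). simpl in HB.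
           unfold upd in HB. destruct (Nat.eqb_spec y v); [contradiction|auto].
    + intros pi HX HD. exists v, (FMu v psi). split; [|split; [|split]].
      * intros n. destruct (HD n) as [m [Hm' [H' [Em _]]]]. exists m. rewrite Em. auto.
      * split; auto. exists psi; auto.
      * exists psi; auto.
      * intros y chiy Hy [Hc [gy Egy]].
        destruct (Hy 0) as [m [_ Em]].
        assert (Hin : In y (binders (FMu v psi))).
        { apply NNPP. intros Hn. apply (HX m). exists y. auto. }
        destruct (in_binders_ex _ _ Hin) as [b [Hb Ib]].
        assert (b = chiy) as <-.
        { apply (binder_uniq (z:=y) Hnd); first [exact Hc | exact Ib | (exists gy; exact Egy) | exact (Sub_trans Hsub Hb)]. }
        auto.
    + exists H. auto.
    + exact Hp.
  -
    set (G := fun Q => pcompl T I (sem s0 T I psi (upd E v (pcompl T I Q)))).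
    simpl in Hs. fold G in Hs.
    assert (HL : lfp T I G H) by (apply NNPP; intros Hn; apply Hs; split; auto).
    assert (Hv : In v (binders phi)) by (eapply binder_in; [exact Hsub| exists psi; auto]).
    assert (Hbody : Sub phi psi) by (eapply Sub_trans; eauto using Sub).
    apply geve; [noX| unfold mc_adam; simpl; tauto| intros Hst; exfalso; apply Hst; eexists; apply mv_nu|].
    intros c1 Hm. inversion Hm; subst.
    set (Q0 := fun H' => is_proc T I H' /\ WinG (H', FVar v) (Xf (FNu v psi)) (Bv E)).
    destruct HL as [_ HL]. apply (HL Q0).
    + intros H' [? _]; auto.
    + intros H' [Hp' Hns]. split; auto.
      apply geve; [| unfold mc_adam; simpl; tauto| |].
      * intros [y [Ey Hy]]. simpl in Ey. injection Ey as <-. apply Hy. simpl; auto.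
      * intros Hst; exfalso; apply Hst; eexists; apply mv_var; right; exact Hsub.
      * intros c' Hm'. rewrite (var_move _ _ _ _ _ Hm' Hsub (or_intror eq_refl)).
        apply gseq with (X1 := Xf psi) (B1 := Bv (upd E v (pcompl T I Q0))).
        -- exact Hp'.
        -- apply IHpsi; auto. apply HE_upd; auto.
        -- intros c [y [Ey Hy]]. exists y. split; auto. intros Hi. apply Hy. simpl; auto.
        -- intros [H'' f] Hi [y [Ey Hy]] HB. simpl in Ey. subst f.
           destruct (Nat.eq_dec y v) as [->|Hne].
           ++ specialize (HB v eq_refl). simpl in HB. unfold upd in HB. rewrite Nat.eqb_refl in HB.
              assert (HQ : Q0 H'') by (apply NNPP; intros Hn; apply HB; split; auto).
              apply HQ.
           ++ apply gexit.
              ** exists y. split; auto. simpl. intros [E'|Hi']; auto.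
              ** intros y' Ey'. simpl in Ey'. injection Ey' as <-. specialize (HB y eq_refl). simpl in HB.
                 unfold upd in HB. destruct (Nat.eqb_spec y v); [contradiction|auto].
Qed.

End Main.

Lemma firstn_map_nth {A} (d : A) (l : list A) : forall k, k <= length l ->
  firstn k l = map (fun i => nth i l d) (seq 0 k).
Proof.
  induction l as [|a l IH]; intros k Hk; simpl in *.
  - destruct k; [auto|lia].
  - destruct k as [|k]; [auto|]. simpl. f_equal.
    rewrite IH by lia. rewrite <- seq_shift, map_map. auto.
Qed.

Lemma thm_aux (St L : Type) (s0 : St) (T : @trans St L -> Prop)
  (I : @trans St L -> @trans St L -> Prop) (V : @valuation St L) (phi : form L) :
  is_TSI T I -> image_finite T -> valuation_ok T I V ->
  TFL_formula phi -> PNF phi ->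
  ~ sem s0 T I phi V (H0 s0 T) ->
  adam_wins_game s0 T I V phi (H0 s0 T).
Proof.
  intros _ _ Hvok Htfl Hpnf Hns.
  assert (Hp0 : is_proc T I (H0 s0 T)).
  { split; [left; exists s0; intros t; tauto| simpl; trivial]. }
  destruct (claim s0 T I V phi Htfl Hpnf phi (Sub_refl _) V (fun _ _ => eq_refl) (H0 s0 T) Hp0 Hns)
    as [sg [Hleg [Hfin Hinf]]].
  exists sg. split; [exact Hleg|split].
  - intros h c [Hc0 Hstep] Hst.
    set (l := h ++ [c]).
    set (pi := fun i => nth i l (cd (S:=St) (L:=L))).
    assert (Hlen : length l = S (length h)).
    { unfold l. rewrite length_app. simpl. rewrite Nat.add_1_r. reflexivity. }
    assert (Hpi : forall i, i <= length h -> nth_error l i = Some (pi i)).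
    { intros i Hi. apply nth_error_nth'. rewrite Hlen. lia. }
    assert (Hc : pi (length h) = c).
    { unfold pi, l. rewrite app_nth2 by lia. rewrite Nat.sub_diag. auto. }
    assert (Hst' : forall i, i < length h -> stp _ (mvG s0 T I phi) mc_adam sg pi i).
    { intros i Hi. destruct (Hstep i (pi i) (pi (S i)) (Hpi i ltac:(lia)) (Hpi (S i) ltac:(lia))) as [Hm Ha].
      split; auto. intros Had. rewrite (Ha Had). unfold hist. f_equal.
      apply firstn_map_nth. change (S i <= length l). rewrite Hlen. lia. }
    assert (H0p : pi 0 = (H0 s0 T, phi)).
    { unfold pi. apply nth_error_nth. exact Hc0. }
    destruct (Hfin pi (length h) H0p Hst') as [F1 F2].
    { intros i Hi Hx. apply (xf_stuck s0 T I phi _ Hx). exists (pi (S i)). apply Hst'. auto. }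
    rewrite Hc in F1, F2.
    destruct (classic (Xf phi c)) as [Hx|Hx]; [|apply F2; auto].
    specialize (F1 Hx). destruct Hx as [y [Ey _]]. destruct c as [H' f]. simpl in Ey. subst f.
    unfold mc_adam_end. simpl. apply (F1 y eq_refl).
  - intros pi H0p Hsteps. apply Hinf; auto. intros i Hx.
    apply (xf_stuck s0 T I phi _ Hx). exists (pi (S i)). apply Hsteps.
Qed.

Theorem theorem6 (S L : Type) (s0 : S) (T : @trans S L -> Prop)
  (I : @trans S L -> @trans S L -> Prop) (V : @valuation S L) (phi : form L) :
  is_TSI T I -> image_finite T -> valuation_ok T I V ->
  TFL_formula phi -> PNF phi ->
  ~ sem s0 T I phi V (H0 s0 T) ->
  adam_wins_game s0 T I V phi (H0 s0 T).
Proof. exact (thm_aux S L s0 T I V phi). Qed.
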